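(* Let $A$ be a finite alphabet, $w_1,\ldots,w_k,w'_1,\ldots,w'_{k'}\in A^*$, and $N=\max(|w_1|,\ldots,|w_k|,|w'_1|,\ldots,|w'_{k'}|)\ge1$. Then $\mathrm{WMIX}(w_1,\ldots,w_k)=\mathrm{WMIX}(w'_1,\ldots,w'_{k'})$ if and only if both \[\mathrm{WMIX}(w_1,\ldots,w_k)\cap A^{<N}=\mathrm{WMIX}(w'_1,\ldots,w'_{k'})\cap A^{<N}\] and \[\mathrm{Mtr}_N(\mathrm{WMIX}(w_1,\ldots,w_k))=\mathrm{Mtr}_N(\mathrm{WMIX}(w'_1,\ldots,w'_{k'})).\]
   Context: For $u,w\in A^*$, $|w|_u$ is the number of pairs $(x,y)\in A^*\times A^*$ with $xuy=w$. $\mathrm{WMIX}(w_1,\ldots,w_k)=\{w\in A^*\mid|w|_{w_1}=\cdots=|w|_{w_k}\}$. $A^{<N}$ is the set of words of length less than $N$. $\mathrm{suff}_n(w)$ is the suffix of length $n$ of $w$. A (directed) graph is $\mathcal G=(V,E)$ with $E\subseteq V\times V$. A walk is a sequence $\omega=(v_1,\ldots,v_n)\in V^n$, $n\ge1$, with $(v_i,v_{i+1})\in E$ for all $1\le i<n$; its length is $|\omega|=n-1$, its source is $v_1$ and its target is $v_n$. $V(\omega)=\{v_1,\ldots,v_n\}$. If the target of $\omega_1=(v_1,\ldots,v_m)$ equals the source of $\omega_2=(v'_1,\ldots,v'_n)$, then $\omega_1\odot\omega_2=(v_1,\ldots,v_m,v'_2,\ldots,v'_n)$. A loop is a non-empty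 walk whose source equals its target. A path is a walk whose vertices are pairwise distinct (empty walks are paths). A cycle is a loop $(v,v_1,\ldots,v_n,v)$ such that $(v,v_1,\ldots,v_n)$ is a path. $\mathcal W(\mathcal G),\mathcal P(\mathcal G),\mathcal C(\mathcal G)$ denote the sets of walks, paths and cycles. For a sequence of cycles $\Gamma=(\gamma_1,\ldots,\gamma_n)$: $|\Gamma|_\gamma=\#\{i\mid\gamma_i=\gamma\}$, $\Gamma.\gamma=(\gamma_1,\ldots,\gamma_n,\gamma)$; $\emptyset$ is the empty sequence. Decomposition $\mathrm{dec}_{\mathcal G}:\mathcal W(\mathcal G)\to\mathcal P(\mathcal G)\times\mathcal C(\mathcal G)^*$, by induction on length: $\mathrm{dec}_{\mathcal G}((v))=((v),\emptyset)$; for a walk $\omega$ with target $v$ and an edge $(v,v')$, let $(\pi,\Gamma)=\mathrm{dec}_{\mathcal G}(\omega)$ (the target of $\pi$ is $v$); if $v'\notin V(\pi)$ then $\mathrm{dec}_{\mathcal G}(\omega\odot(v,v'))=(\pi\odot(v,v'),\Gamma)$; otherwise, writing $\pi=(v_1,\ldots,v_{j-1},v',v_{j+1},\ldots,v)$, $\mathrm{dec}_{\mathcal G}(\omega\odot(v,v'))=((v_1,\ldots,v_{j-1},v'),\ \Gamma.(v',v_{j+1},\ldots,v,v'))$. Multi-trace: for $\omega\in\mathcal W(\mathcal G)$ with $(\pi_\omega,\Gamma)=\mathrm{dec}_{\mathcal G}(\omega)$, $\mathrm{mtr}(\omega):\mathcal P(\mathcal G)\cup\mathcal C(\mathcal G)\to\mathbb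 N$ is given by $\mathrm{mtr}(\omega)(\pi)=1$ if $\pi=\pi_\omega$ and $0$ for other paths $\pi$, and $\mathrm{mtr}(\omega)(\gamma)=|\Gamma|_\gamma$ for cycles $\gamma$. The $N$-dimensional de Bruijn graph $\mathcal D_N=(A^N,E)$ has vertex set $A^N$ and edge set $E=\{(av,vb)\mid a,b\in A,\ v\in A^{N-1}\}$. For a vertex $v\in A^N$ and a word $w=a_1\cdots a_m$, $\mathrm{walk}(v,w)=(v,v_1,\ldots,v_m)$ with $v_i=\mathrm{suff}_N(v\,a_1\cdots a_i)$ (for $w$ empty, $\mathrm{walk}(v,w)=(v)$). Multi-trace of a language $L\subseteq A^*$ of order $N$: $\mathrm{Mtr}_N(L)=\{\mathrm{mtr}(\mathrm{walk}(v,u))\mid v\in A^N,\ u\in A^*,\ vu\in L\}$, multi-traces taken in $\mathcal D_N$. *)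

(* Defs.v *)
From mathcomp Require Import all_boot.
Set Implicit Arguments. Unset Strict Implicit. Unset Printing Implicit Defensive.

Section Words.
Variable A : eqType.

(* |w|_u : number of pairs (x,y) with x u y = w; x is determined by its length
   i <= |w|, and then y = drop (i + |u|) w. *)
Definition occ (u w : seq A) : nat :=
  count (fun i => take i w ++ u ++ drop (i + size u) w == w) (iota 0 (size w).+1).

Definition WMIX (ws : seq (seq A)) : pred (seq A) :=
  fun w => all (fun u => occ u w == occ (head [::] ws) w) ws.

Definition suff (n : nat) (w : seq A) : seq A := drop (size w - n) w.
End Words.

Section Graph.
Variables (V : eqType) (vert : pred V) (e : rel V).

Definition is_walk (x : seq V) : bool :=
  if x is v :: s then all vert x && path e v s else false.

Definition is_path (x : seq V) : bool := is_walk x && uniq x.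

(* a cycle (v,v1,...,vn,v) : a loop (nonempty walk with source = target)
   whose prefix (v,v1,...,vn) is a path *)
Definition is_cycle (x : seq V) : bool :=
  if x is v :: s then [&& is_walk x, s != [::], last v s == v & uniq (belast v s)]
  else false.

Definition dec_step (pG : seq V * seq (seq V)) (v' : V) : seq V * seq (seq V) :=
  let: (pi, G) := pG in
  if v' \notin pi then (rcons pi v', G)
  else let j := index v' pi in
       (take j.+1 pi, rcons G (rcons (drop j pi) v')).

Definition dec (w : seq V) : seq V * seq (seq V) :=
  if w is v :: s then foldl dec_step ([:: v], [::]) s else ([::], [::]).

(* multi-trace, as a function on P(G) u C(G) (value 0 outside) *)
Definition mtr (w : seq V) (x : seq V) : nat :=
  if is_path x then (x == (dec w).1 : nat)
  else if is_cycle x then count_mem x (dec w).2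
  else 0.
End Graph.

Section DeBruijn.
Variables (A : finType) (N : nat).

(* vertices of D_N : words of length N ; edges (a v, v b) *)
Definition dB_vert : pred (seq A) := fun x => size x == N.
Definition dB_edge : rel (seq A) :=
  fun x y => [&& size x == N, size y == N & behead x == take N.-1 y].

Definition walk (v w : seq A) : seq (seq A) :=
  v :: [seq suff N (v ++ take i w) | i <- iota 1 (size w)].

Definition mtrN (w : seq (seq A)) : seq (seq A) -> nat := mtr dB_vert dB_edge w.

Definition Mtr (L : pred (seq A)) (f : seq (seq A) -> nat) : Prop :=
  exists v u : seq A, size v = N /\ L (v ++ u) /\ f = mtrN (walk v u).
End DeBruijn.

(* Main.v *)
Require Import Defs.
From mathcomp Require Import all_boot zify.
Set Implicit Arguments. Unset Strict Implicit. Unset Printing Implicit Defensive.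

Section G.
Variables (V : eqType) (vert : pred V) (e : rel V).

Lemma last_take_nth (x0 : V) (s : seq V) j : j < size s ->
  last x0 (take j.+1 s) = nth x0 s j.
Proof.
elim: s x0 j => [|a s IH] x0 [|j] //= Hj.
  by case: s {IH Hj}.
by rewrite (IH a) // (set_nth_default x0).
Qed.

Lemma walk_prefix s1 s2 : is_walk vert e (s1 ++ s2) -> s1 != [::] -> is_walk vert e s1.
Proof.
case: s1 => [|a t] // ; rewrite /is_walk cat_cons -cat_cons all_cat cat_path.
by case/andP => /andP[-> _] /andP[-> _].
Qed.

Lemma walk_suffix s1 s2 : is_walk vert e (s1 ++ s2) -> s2 != [::] -> is_walk vert e s2.
Proof.
case: s1 => [|a t] //; rewrite /is_walk cat_cons -cat_cons all_cat cat_path.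
case/andP => /andP[_ al] /andP[_ pt].
by case: s2 al pt => [|b u] //= /andP[-> ->] /andP[_ ->].
Qed.

Lemma walk_rcons a t y : is_walk vert e (a :: t) -> vert y -> e (last a t) y ->
  is_walk vert e (a :: rcons t y).
Proof.
move=> /andP[al pt] vy ey; apply/andP; split.
  by rewrite -rcons_cons all_rcons vy al.
by rewrite rcons_path pt ey.
Qed.

Definition VM (pG : seq V * seq (seq V)) := pG.1 ++ flatten (map behead pG.2).

Definition inv (v : V) (s : seq V) (pG : seq V * seq (seq V)) :=
  [/\ is_path vert e pG.1, all (is_cycle vert e) pG.2, pG.1 != [::],
     last v pG.1 = last v s & perm_eq (VM pG) (v :: s)].

Lemma dec_inv v s : is_walk vert e (v :: s) -> inv v s (dec (v :: s)).
Proof.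
elim/last_ind: s => [|s x IH].
  rewrite /= => /andP[/andP[hv _] _].
  by split => //; rewrite /is_path /is_walk /= hv.
rewrite /is_walk -rcons_cons all_rcons rcons_path => /andP[/andP[vx av] /andP[pv ex]].
have [pp ac ne lst pm] := IH (introT andP (conj av pv)).
have -> : dec (v :: rcons s x) = dec_step (dec (v :: s)) x by rewrite /dec /= foldl_rcons.
case: (dec (v :: s)) pp ac ne lst pm => pi G /= pp ac ne lst pm.
rewrite /dec_step.
have lst' : last v (rcons s x) = x by rewrite last_rcons.
case: ifP => hin.
  split => //=.
  - move: hin pp ne lst; clear pm; case: pi => [|a t] // hin.
    move=> pp _ lst; move: (pp); rewrite /is_path /is_walk => /andP[/andP[aa pa] ut].
    apply/andP; split; last by rewrite rcons_uniq hin.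
    apply/andP; split; first by rewrite all_rcons vx aa.
    have : path e a (rcons t x).
      rewrite rcons_path pa /=.
      have -> : last a t = last v s by rewrite -lst.
      by rewrite ex.
    by [].
  - by case: (pi).
  - by rewrite !last_rcons.
  - rewrite /VM /= -cats1 -catA -rcons_cons -cats1.
    apply: (@perm_trans _ ((pi ++ flatten [seq behead i | i <- G]) ++ [:: x])).
      by rewrite -catA perm_cat2l perm_catC.
    by rewrite perm_cat2r.
have xin : x \in pi by rewrite -(negbK (x \in pi)) hin.
set j := index x pi.
have hj : j < size pi by rewrite index_mem.
have e1 : pi = take j pi ++ x :: drop j.+1 pi.
  by rewrite -{1}(cat_take_drop j pi) (drop_nth x) // nth_index.
have szp : size (take j pi) = j by rewrite size_takel // ltnW.
have e2 : take j.+1 pi = rcons (take j pi) x.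
  by rewrite {1}e1 -cat_rcons take_size_cat // size_rcons szp.
have e3 : drop j pi = x :: drop j.+1 pi.
  by rewrite {1}e1 drop_size_cat.
rewrite e2 e3.
move: (take j pi) (drop j.+1 pi) e1 => p1 p2 e1.
rewrite {}e1 in pp lst pm.
have wpi : is_walk vert e (rcons p1 x ++ p2) by rewrite cat_rcons; case/andP: pp.
have upi : uniq (p1 ++ x :: p2) by case/andP: pp.
split.
- apply/andP; split; first by apply: walk_prefix wpi _; case: (p1).
  by move: upi; rewrite -cat_rcons cat_uniq => /andP[].
- rewrite all_rcons ac andbT; change (is_cycle vert e (x :: rcons p2 x)); rewrite /is_cycle.
  apply/and4P; split.
  + apply: walk_rcons => //.
      by apply: (@walk_suffix p1); rewrite ?cat_rcons //; case/andP: pp.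
    by move: lst; rewrite last_cat /= => ->.
  + by case: (p2).
  + by rewrite last_rcons.
  + by rewrite belast_rcons; move: upi; rewrite cat_uniq => /and3P[].
- by case: (p1).
- by rewrite !last_rcons.
- move: pm; rewrite /VM /= => pm.
  apply: (@perm_trans _ (((p1 ++ x :: p2) ++ flatten [seq behead i | i <- G]) ++ [:: x])); last first.
    by rewrite -rcons_cons -cats1 perm_cat2r.
  apply/permP => P; rewrite map_rcons flatten_rcons /= -!cats1 !count_cat /=.
  move: (nat_of_bool (P x)) => b.
  set F1 := count P (flatten _). set c1 := count P p1. set c2 := count P p2. lia.
Qed.

Lemma cycle_not_path c : is_cycle vert e c -> ~~ is_path vert e c.
Proof.
case: c => [|a t] //; rewrite /is_cycle => /and4P[_ tn /eqP lt _].
rewrite /is_path negb_and; apply/orP; right.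
case/lastP: t tn lt => [|t' y] // _; rewrite last_rcons => ->.
by rewrite /= mem_rcons mem_head.
Qed.

Lemma mtr_dec w w' : is_walk vert e w -> is_walk vert e w' ->
  mtr vert e w =1 mtr vert e w' ->
  (dec w).1 = (dec w').1 /\ perm_eq (dec w).2 (dec w').2.
Proof.
case: w => [|v s] //; case: w' => [|v' s'] // hw hw' H.
have [pp ac _ _ _] := dec_inv hw.
have [pp' ac' _ _ _] := dec_inv hw'.
split.
  have := H (dec (v :: s)).1; rewrite /mtr pp eqxx.
  by case: eqP.
rewrite /perm_eq; apply/allP => c _; apply/eqP.
case hc: (is_cycle vert e c).
  have := H c; rewrite /mtr hc.
  by rewrite (negbTE (cycle_not_path hc)).
have nin : forall G, all (is_cycle vert e) G -> count_mem c G = 0.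
  move=> G aG; apply/count_memPn; apply/negP => cin.
  by move: (allP aG c cin); rewrite hc.
by rewrite !nin.
Qed.

End G.

Section DB.
Variables (A : finType) (N : nat).
Hypothesis HN1 : 1 <= N.

Definition windows (w : seq A) := [seq take N (drop j w) | j <- iota 0 (size w - N).+1].

Lemma walk_windows v u : size v = N -> walk N v u = windows (v ++ u).
Proof.
move=> sv; rewrite /walk /windows size_cat sv addKn /=.
rewrite drop0 take_size_cat //; congr (_ :: _).

apply/eq_in_map => i; rewrite mem_iota add1n ltnS => /andP[i1 iu].
rewrite /suff size_cat size_takel // sv addKn.
by rewrite take_drop takeD (take_size_cat _ sv) (drop_size_cat _ sv).
Qed.

Lemma path_iota (T : Type) (r : rel T) (f : nat -> T) m n :
  (forall i, m <= i -> i < m + n -> r (f i) (f i.+1)) ->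
  path r (f m) (map f (iota m.+1 n)).
Proof.
elim: n m => [|n IH] m H //=.
rewrite H ?addnS ?ltnS ?leq_addr //=.
by apply: IH => i mi ilt; apply: H; [exact: ltnW | rewrite addnS].
Qed.

Lemma windows_walk w : N <= size w -> is_walk (dB_vert N) (dB_edge N) (windows w).
Proof.
move=> Nw; rewrite /windows /=; apply/andP; split.
  apply/andP; split.
    by rewrite /dB_vert drop0 size_takel.
  apply/allP => y /mapP[j]; rewrite mem_iota => /andP[_ jl] ->.
  by rewrite /dB_vert size_takel // size_drop; lia.
have := @path_iota _ (dB_edge N) (fun j => take N (drop j w)) 0 (size w - N).
apply => i _; rewrite add0n => il.
rewrite /dB_edge !size_takel ?size_drop; try lia.
have dt : forall s : seq A, drop 1 (take N s) = take N.-1 (drop 1 s).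
  by move=> s; rewrite take_drop addn1 prednK.
by rewrite !eqxx /= -drop1 dt drop_drop add1n take_takel // leq_pred.
Qed.

Lemma last_iota m n : last m (iota m.+1 n) = m + n.
Proof. by elim: n m => [|n IH] m /=; [rewrite addn0 | rewrite IH addnS]. Qed.

Lemma last_windows (w : seq A) : last (take N (drop 0 w))
   [seq take N (drop j w) | j <- iota 1 (size w - N)] = take N (drop (size w - N) w).
Proof. by rewrite (last_map (fun j => take N (drop j w)) (iota 1 _) 0) last_iota. Qed.

Lemma occ_alt (x w : seq A) :
  occ x w = count (fun i => take (size x) (drop i w) == x) (iota 0 (size w).+1).
Proof.
apply: eq_in_count => i; rewrite mem_iota add0n ltnS => /andP[_ iw] /=.
rewrite -{3}(cat_take_drop i w) eqseq_cat // eqxx /= addnC -drop_drop.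
set d := drop i w.
apply/eqP/eqP => H.
  by rewrite -H take_size_cat.
by rewrite -{2}(cat_take_drop (size x) d) H.
Qed.

Lemma occ_windows (x w : seq A) : size x <= N -> N <= size w ->
  occ x w = count (fun y => take (size x) y == x) (windows w) +
     count (fun k => take (size x) (drop k (drop (size w - N) w)) == x) (iota 1 N).
Proof.
move=> xN Nw; rewrite occ_alt.
have -> : (size w).+1 = (size w - N).+1 + N by lia.
rewrite iotaD count_cat; congr (_ + _).
  rewrite /windows count_map.
  by elim: (iota 0 _) => //= a l ->; rewrite take_takel.
rewrite add0n -addn1 iotaDl count_map.
by elim: (iota 1 N) => //= a l ->; rewrite drop_drop (addnC a).
Qed.


Lemma last_irr (T : eqType) (a b : T) s : s != [::] -> last a s = last b s.
Proof. by case: s. Qed.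

Lemma key (v u v' u' : seq A) : size v = N -> size v' = N ->
  mtrN N (walk N v u) =1 mtrN N (walk N v' u') ->
  forall x, size x <= N -> occ x (v ++ u) = occ x (v' ++ u').
Proof.
move=> sv sv'; rewrite !walk_windows // => H x xN.
have Nw : N <= size (v ++ u) by rewrite size_cat sv leq_addr.
have Nw' : N <= size (v' ++ u') by rewrite size_cat sv' leq_addr.
rewrite (occ_windows xN Nw) (occ_windows xN Nw').
move: (windows_walk Nw) (windows_walk Nw') H.
set w := v ++ u; set w' := v' ++ u'.
have Ew : windows w = take N (drop 0 w) :: [seq take N (drop j w) | j <- iota 1 (size w - N)] by [].
have Ew' : windows w' = take N (drop 0 w') :: [seq take N (drop j w') | j <- iota 1 (size w' - N)] by [].
move=> hw hw' H.
have [e1 e2] := mtr_dec hw hw' H.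
move: hw hw'; rewrite Ew Ew' => hw hw'.
have [_ _ ne l1 p1] := dec_inv hw.
have [_ _ ne' l2 p2] := dec_inv hw'.
rewrite -Ew -Ew' in e1 e2 p1 p2 l1 l2.
have pW : perm_eq (windows w) (windows w').
  apply: (@perm_trans _ (VM (dec (windows w)))); first by rewrite perm_sym.
  apply: (@perm_trans _ (VM (dec (windows w')))) => //.
  rewrite /VM e1 perm_cat2l; apply: perm_flatten; exact: perm_map.
rewrite -Ew -Ew'.
congr (_ + _); first by apply: (permP pW).
have : drop (size w - N) w = drop (size w' - N) w'.
  rewrite -(@take_oversize _ N (drop (size w - N) w)) ?size_drop; last by lia.
  rewrite -(@take_oversize _ N (drop (size w' - N) w')) ?size_drop; last by lia.
  rewrite -!last_windows -l1 -l2 e1; apply: last_irr.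
  by rewrite -e1.
by move=> ->.
Qed.

End DB.

Lemma wmix_eq (A : finType) N (ws : seq (seq A)) w w' :
  (forall u, u \in ws -> size u <= N) ->
  (forall x, size x <= N -> occ x w = occ x w') -> WMIX ws w = WMIX ws w'.
Proof.
move=> B H; rewrite /WMIX.
have hh : occ (head [::] ws) w = occ (head [::] ws) w'.
  case: ws B => [|a l] B /=; first by apply: H.
  by apply: H; apply: B; rewrite mem_head.
apply: eq_in_all => u uin; by rewrite /= H ?hh ?B.
Qed.

Lemma half (A : finType) N (ws ws' : seq (seq A)) : 1 <= N ->
  (forall u, u \in ws' -> size u <= N) ->
  (forall f, Mtr N (WMIX ws) f -> Mtr N (WMIX ws') f) ->
  forall w, N <= size w -> WMIX ws w -> WMIX ws' w.
Proof.
move=> HN1 B H w Nw Hw.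
have sv : size (take N w) = N by rewrite size_takel.
have Hw1 : WMIX ws (take N w ++ drop N w) by rewrite cat_take_drop.
have [v' [u' [sv' [Hw' ef]]]] := H _ (ex_intro _ _ (ex_intro _ _ (conj sv (conj Hw1 erefl)))).
rewrite -(cat_take_drop N w) (wmix_eq (w' := v' ++ u') B) //.
apply: key => //; by rewrite ef.
Qed.


Theorem theorem2 (A : finType) (ws ws' : seq (seq A)) (N : nat)
  (HN : N = \max_(u <- ws ++ ws') size u) (HN1 : 1 <= N) :
  (forall w : seq A, WMIX ws w = WMIX ws' w) <->
  ((forall w : seq A, size w < N -> WMIX ws w = WMIX ws' w) /\
   (forall f : seq (seq A) -> nat, Mtr N (WMIX ws) f <-> Mtr N (WMIX ws') f)).
Proof.
have B : forall u, u \in ws ++ ws' -> size u <= N.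
  by move=> u uin; rewrite HN; apply: leq_bigmax_seq.
have B1 : forall u, u \in ws -> size u <= N by move=> u0 uin; apply: B; rewrite mem_cat uin.
have B2 : forall u, u \in ws' -> size u <= N by move=> u0 uin; apply: B; rewrite mem_cat uin orbT.
split.
  move=> H; split; first by [].
  move=> f; split; move=> [v [u [sv [Hl ef]]]]; exists v, u; split => //; split => //.
    by rewrite -H.
  by rewrite H.
move=> [Hs Hm] w; case: (ltnP (size w) N) => hw; first exact: Hs.
apply/idP/idP.
  by apply: (half HN1 B2) => // f /Hm.
by apply: (half HN1 B1) => // f /Hm.
Qed.
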